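(* Let $N,n,m,p$ be positive integers, $A\in\mathbb{R}^{n\times n}$, $B\in\mathbb{R}^{n\times p}$, $C\in\mathbb{R}^{m\times n}$, $H\in\mathbb{R}^{n\times m}$, $W=[w_{ij}]\in\mathbb{R}^{N\times N}$ with $w_{ii}=0$ for all $i$, $\Delta=\mathrm{diag}(\delta_1,\dots,\delta_N)$ with $\delta_i\in\{0,1\}$, and $h>0$. Put $\mathcal{B}(h)=\int_0^h e^{A\tau}d\tau\,B$, $\mathcal{H}(h)=\int_0^h e^{A\tau}d\tau\,HC$, $\Phi_s=I_N\otimes e^{Ah}+W\otimes\mathcal{H}(h)$, $\Psi_s=\Delta\otimes\mathcal{B}(h)$. Let $\sigma(W)=\{\lambda_1,\dots,\lambda_r\}$ be the distinct eigenvalues of $W$ and $E_i=e^{Ah}+\lambda_i\mathcal{H}(h)$, and assume $0\notin\sigma(E_i)$ for every $i=1,\dots,r$. If the networked sampled-data system $X(k+1)=\Phi_sX(k)+\Psi_sU(k)$ is controllable, then the pair $(W,\Delta)$ is controllable and the pair $(E_i,\mathcal{B}(h))$ is controllable for every $i=1,\dots,r$.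
   Context: The networked sampled-data system is the discrete-time system $X(k+1)=\Phi_sX(k)+\Psi_sU(k)$; it is called controllable if every initial state can be steered to the origin in finitely many steps. For $F\in\mathbb{C}^{q\times q}$, $G\in\mathbb{C}^{q\times s}$, the pair $(F,G)$ is called controllable if $\mathrm{rank}[sI_q-F,\ G]=q$ for every $s\in\mathbb{C}$. $\sigma(\cdot)$ denotes the set of eigenvalues and $\otimes$ the Kronecker product. *)

(* Defs.v *)
From HB Require Import structures.
From mathcomp Require Import all_boot all_order all_algebra.
From mathcomp Require Import all_classical all_reals all_analysis.
From mathcomp Require Import complex mxtens.

Set Implicit Arguments.
Unset Strict Implicit.
Unset Printing Implicit Defensive.

Import Order.TTheory GRing.Theory Num.Theory.
Import numFieldNormedType.Exports.
Local Open Scope classical_set_scope.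
Local Open Scope ring_scope.

Section Defs.
Variable R : realType.

Definition expmx (n : nat) (A : 'M[R]_n) (t : R) : 'M[R]_n :=
  \matrix_(i, j) limn (series (fun k : nat => (A ^+ k) i j * t ^+ k / (k`!)%:R)).

(* int_0^h e^{A tau} d tau, entrywise Lebesgue (= Riemann) integral on [0,h]. *)
Definition int_expmx (n : nat) (A : 'M[R]_n) (h : R) : 'M[R]_n :=
  \matrix_(i, j) (\int[lebesgue_measure]_(tau in `[0, h]) (expmx A tau i j)).

Definition Bh (n p : nat) (A : 'M[R]_n) (B : 'M[R]_(n, p)) (h : R) :
  'M[R]_(n, p) := int_expmx A h *m B.

Definition Hh (n m : nat) (A : 'M[R]_n) (H : 'M[R]_(n, m)) (C : 'M[R]_(m, n))
  (h : R) : 'M[R]_n := int_expmx A h *m H *m C.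

Definition Phi_s (N n m : nat) (A : 'M[R]_n) (H : 'M[R]_(n, m))
  (C : 'M[R]_(m, n)) (W : 'M[R]_N) (h : R) : 'M[R]_(N * n) :=
  (1%:M : 'M[R]_N) *t expmx A h + W *t Hh A H C h.

Definition Psi_s (N n p : nat) (A : 'M[R]_n) (B : 'M[R]_(n, p))
  (Delta : 'M[R]_N) (h : R) : 'M[R]_(N * n, N * p) :=
  Delta *t Bh A B h.

Fixpoint dt_traj (q r : nat) (Phi : 'M[R]_q) (Psi : 'M[R]_(q, r))
  (X0 : 'cV[R]_q) (U : nat -> 'cV[R]_r) (k : nat) : 'cV[R]_q :=
  match k with
  | 0 => X0
  | k'.+1 => Phi *m dt_traj Phi Psi X0 U k' + Psi *m U k'
  end.

Definition dt_controllable (q r : nat) (Phi : 'M[R]_q) (Psi : 'M[R]_(q, r)) :=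
  forall X0 : 'cV[R]_q, exists (k : nat) (U : nat -> 'cV[R]_r),
    dt_traj Phi Psi X0 U k = 0.

Definition cmx (a b : nat) (M : 'M[R]_(a, b)) : 'M[R[i]]_(a, b) :=
  map_mx (fun x : R => (x%:C)%C) M.

End Defs.

Definition ctrb_pair (K : fieldType) (q s : nat) (F : 'M[K]_q) (G : 'M[K]_(q, s)) :=
  forall z : K, \rank (row_mx (z%:M - F) G) = q.

(* Main.v *)
Require Import Defs.
From HB Require Import structures.
From mathcomp Require Import all_boot all_order all_algebra.
From mathcomp Require Import all_classical all_reals all_analysis.
From mathcomp Require Import complex mxtens.

Import Order.TTheory GRing.Theory Num.Theory.
Local Open Scope ring_scope.
Set Implicit Arguments.
Unset Strict Implicit.

Section Aux.
Variable R : realType.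
Local Notation C := (R[i]).

Lemma cmxE a b (M : 'M[R]_(a, b)) : cmx M = map_mx (real_complex R) M.
Proof. by []. Qed.

Lemma tensDl (K : comPzRingType) a b c d (A B : 'M[K]_(a, b)) (D : 'M[K]_(c, d)) :
  (A + B) *t D = A *t D + B *t D.
Proof. by apply/matrixP => i j; rewrite !mxE mulrDl. Qed.

Lemma tensDr (K : comPzRingType) a b c d (A : 'M[K]_(a, b)) (B D : 'M[K]_(c, d)) :
  A *t (B + D) = A *t B + A *t D.
Proof. by apply/matrixP => i j; rewrite !mxE mulrDr. Qed.

Lemma tensZl (K : comPzRingType) a b c d (k : K) (A : 'M[K]_(a, b)) (D : 'M[K]_(c, d)) :
  (k *: A) *t D = k *: (A *t D).
Proof. by apply/matrixP => i j; rewrite !mxE -mulrA. Qed.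

Lemma tensZr (K : comPzRingType) a b c d (k : K) (A : 'M[K]_(a, b)) (D : 'M[K]_(c, d)) :
  A *t (k *: D) = k *: (A *t D).
Proof. by apply/matrixP => i j; rewrite !mxE mulrCA. Qed.

Lemma traj_iter q r (Phi : 'M[R]_q) (Psi : 'M[R]_(q, r)) k (x : 'M[C]_(k, q)) mu
  X0 U t :
  x *m cmx Phi = mu *: x -> x *m cmx Psi = 0 ->
  x *m cmx (dt_traj Phi Psi X0 U t) = mu ^+ t *: (x *m cmx X0).
Proof.
move=> hP hS; elim: t => [|t IH] /=; first by rewrite expr0 scale1r.
rewrite !cmxE map_mxD !map_mxM mulmxDr !mulmxA -!cmxE hP hS mul0mx addr0.
by rewrite -scalemxAl IH scalerA exprSr mulrC.
Qed.

Lemma ctrl_no_eig q r (Phi : 'M[R]_q) (Psi : 'M[R]_(q, r)) k (x : 'M[C]_(k, q)) mu :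
  dt_controllable Phi Psi -> mu != 0 ->
  x *m cmx Phi = mu *: x -> x *m cmx Psi = 0 -> x = 0.
Proof.
move=> hc hmu hP hS; apply/matrixP => i j; rewrite mxE.
have [t [U hU]] := hc (delta_mx j 0).
have := @traj_iter _ _ Phi Psi _ x mu (delta_mx j 0) U t hP hS.
rewrite hU cmxE map_mx0 mulmx0 cmxE map_delta_mx -colE => /esym/eqP.
rewrite scalemx_eq0 expf_eq0 (negbTE hmu) andbF /= => /eqP/matrixP/(_ i 0).
by rewrite !mxE.
Qed.

End Aux.

Lemma rank_def (K : fieldType) q s (M : 'M[K]_(q, s)) :
  \rank M != q -> exists2 v : 'rV_q, v *m M = 0 & v != 0.
Proof.
move=> hr.
have hK : kermx M != 0.
  rewrite -mxrank_eq0 mxrank_ker subn_eq0 -ltnNge ltn_neqAle hr.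
  exact: rank_leq_row.
case: (pickP (fun i => row i (kermx M) != 0)) => [i hi|h].
  by exists (row i (kermx M)) => //; rewrite -row_mul mulmx_ker row0.
exfalso; move/negP: hK; apply; apply/eqP/row_matrixP => i.
by move: (h i) => /negbFE/eqP ->; rewrite row0.
Qed.

Lemma nz_entry (K : fieldType) a b (M : 'M[K]_(a, b)) :
  M != 0 -> exists i j, M i j != 0.
Proof.
move=> hM.
case: (pickP (fun ij : 'I_a * 'I_b => M ij.1 ij.2 != 0)) => [[i j] hij|h].
  by exists i, j.
exfalso; move/negP: hM; apply; apply/eqP/matrixP => i j.
by move: (h (i, j)) => /negbFE/eqP ->; rewrite mxE.
Qed.

Lemma tens_nz (K : fieldType) a b c d (A : 'M[K]_(a, b)) (D : 'M[K]_(c, d)) :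
  A != 0 -> D != 0 -> A *t D != 0.
Proof.
move=> /nz_entry [i [j hA]] /nz_entry [k [l hD]].
apply/negP => /eqP /matrixP /(_ (mxtens_index (i, k)) (mxtens_index (j, l))).
rewrite tensmxE mxE => /eqP; rewrite mulf_eq0 (negbTE hA) (negbTE hD).
by [].
Qed.

Lemma exists_eig (K : closedFieldType) q (M : 'M[K]_q) :
  (0 < q)%N -> exists mu, eigenvalue M mu.
Proof.
move=> hq; have : size (char_poly M) != 1%N by rewrite size_char_poly; case: q hq {M}.
by case/closed_rootP => mu hmu; exists mu; rewrite eigenvalue_root_char.
Qed.

Lemma key (R : realType) (N n m p : nat)
  (A : 'M[R]_n) (B : 'M[R]_(n, p)) (C : 'M[R]_(m, n)) (H : 'M[R]_(n, m))
  (W : 'M[R]_N) (Delta : 'M[R]_N) (h : R) (lam mu : R[i])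
  (w : 'rV[R[i]]_N) (v : 'rV[R[i]]_n) :
  dt_controllable (Phi_s A H C W h) (Psi_s A B Delta h) ->
  w != 0 -> w *m cmx W = lam *: w ->
  v != 0 -> v *m (cmx (expmx A h) + lam *: cmx (Hh A H C h)) = mu *: v ->
  mu != 0 -> (w *m cmx Delta = 0 \/ v *m cmx (Bh A B h) = 0) -> False.
Proof.
move=> hc hw hW hv hE hmu h0.
have := tens_nz hw hv; apply/negP; rewrite negbK; apply/eqP.
apply: (ctrl_no_eig hc hmu).
  rewrite /Phi_s cmxE map_mxD !map_mxT map_mx1 -!cmxE mulmxDr !tensmx_mul.
  rewrite mulmx1 hW tensZl -tensZr -tensDr.
  by rewrite scalemxAr -mulmxDr hE tensZr.
rewrite /Psi_s cmxE map_mxT -!cmxE tensmx_mul.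
by case: h0 => ->; rewrite ?tens0mx ?tensmx0.
Qed.

Theorem corollary2 (R : realType) (N n m p : nat)
  (A : 'M[R]_n) (B : 'M[R]_(n, p)) (C : 'M[R]_(m, n)) (H : 'M[R]_(n, m))
  (W : 'M[R]_N) (delta : 'rV[R]_N) (h : R) :
  (0 < N)%N -> (0 < n)%N -> (0 < m)%N -> (0 < p)%N ->
  (forall i : 'I_N, W i i = 0) ->
  (forall i : 'I_N, delta 0 i = 0 \/ delta 0 i = 1) ->
  0 < h ->
  (forall lam : R[i], eigenvalue (cmx W) lam ->
     ~ eigenvalue (cmx (expmx A h) + lam *: cmx (Hh A H C h)) 0) ->
  dt_controllable (Phi_s A H C W h) (Psi_s A B (diag_mx delta) h) ->
  ctrb_pair (cmx W) (cmx (diag_mx delta)) /\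
  (forall lam : R[i], eigenvalue (cmx W) lam ->
     ctrb_pair (cmx (expmx A h) + lam *: cmx (Hh A H C h)) (cmx (Bh A B h))).
Proof.
move=> _ hn _ _ _ _ _ hE hc; split.
  move=> z; apply/eqP; apply/negP => /negP /rank_def [w].
  rewrite mul_mx_row => /eqP; rewrite -row_mx0 => /eqP /eq_row_mx [h1 h2] hw.
  have hW : w *m cmx W = z *: w.
    by move/eqP: h1; rewrite mulmxBr mul_mx_scalar subr_eq0 => /eqP <-.
  have hz : eigenvalue (cmx W) z by apply/eigenvalueP; exists w.
  have [mu /eigenvalueP [v hv hv0]] :=
    @exists_eig _ _ (cmx (expmx A h) + z *: cmx (Hh A H C h)) hn.
  have hmu : mu != 0.
    apply/negP => /eqP hm; apply: (hE z hz); apply/eigenvalueP; exists v => //.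
    by rewrite -hm.
  exact: (key hc hw hW hv0 hv hmu (or_introl h2)).
move=> lam hlam z; apply/eqP; apply/negP => /negP /rank_def [v].
rewrite mul_mx_row => /eqP; rewrite -row_mx0 => /eqP /eq_row_mx [h1 h2] hv.
have hE' : v *m (cmx (expmx A h) + lam *: cmx (Hh A H C h)) = z *: v.
  by move/eqP: h1; rewrite mulmxBr mul_mx_scalar subr_eq0 => /eqP <-.
have hz : z != 0.
  apply/negP => /eqP hm; apply: (hE lam hlam); apply/eigenvalueP; exists v => //.
  by rewrite -hm.
have [w hw hw0] := eigenvalueP hlam.
exact: (key hc hw0 hw hv hE' hz (or_intror h2)).
Qed.
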